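(* For every $\epsilon\in(0,1)$ there is $\bar R(\epsilon)>0$ such that the following holds. Let $p,q\in\mathbb{H}^n\setminus\{0\}$, $t,\tilde t\ge1$, $R>\bar R(\epsilon)$ with $R>1$, and $r\ge\tilde r\ge t\tilde tR$ with $\tilde r\ge\epsilon r$. If $0\in\partial_tB_r(p)\cap\partial_{\tilde t}B_{\tilde r}(q)$ and $q\in\partial_tB_r(p)$, then $d(\hat p,\hat q)\ge\frac12\big(1-\sqrt{1-\epsilon^2/4}\big)$.
   Context: $\mathbb{H}^n=\mathbb{C}^n\times\mathbb{R}$ with product $(z,\tau)(w,\sigma)=(z+w,\tau+\sigma+\tfrac12\operatorname{Im}\langle z,w\rangle)$, $\langle z,w\rangle=\sum_j\overline{z_j}w_j$, identity $0$. Dilations $\delta_\lambda(z,\tau)=(\lambda z,\lambda^2\tau)$. $d(p,q)=\inf\{r>0:\delta_{1/r}(pq^{-1})\in B_{eucl}\}$ ($B_{eucl}$ the closed Euclidean unit ball in $\mathbb{R}^{2n+1}$); explicitly $d((z,\tau),(w,\sigma))=\frac1{\sqrt2}\big(\|z-w\|^2+\sqrt{\|z-w\|^4+4(\tau-\sigma-\frac12\operatorname{Im}\langle z,w\rangle)^2}\big)^{1/2}$. $B_r(p)=\{y:d(y,p)\le r\}$, $\partial B_r(p)=\{y:d(y,p)=r\}$, $\partial_tB_r(p)=\{y\in\mathbb{H}^n:d(y,\partial B_r(p))\le t\}$. For $p\ne0$, $\hat p=\delta_{1/d(p,0)}p$ is its projection to the unit sphere. *)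

(* Defs.v *)
From Stdlib Require Import Reals.
From mathcomp Require Import ssreflect ssrfun ssrbool eqtype ssrnat seq fintype bigop.

Open Scope R_scope.

(* A point (z, tau) of H^n = C^n x R, with z_j = hx j + i * hy j. *)
Record Hpt (n : nat) := mkH { hx : 'I_n -> R; hy : 'I_n -> R; ht : R }.
Arguments mkH {n}. Arguments hx {n}. Arguments hy {n}. Arguments ht {n}.

Definition rsum (n : nat) (f : 'I_n -> R) : R := \big[Rplus/0]_(j < n) f j.

Definition znormsq {n} (p : Hpt n) : R := rsum n (fun j => hx p j ^ 2 + hy p j ^ 2).
(* Im <z,w>, <z,w> = sum conj(z_j) w_j *)
Definition imdot {n} (p q : Hpt n) : R :=
  rsum n (fun j => hx p j * hy q j - hy p j * hx q j).

Definition H0 (n : nat) : Hpt n := mkH (fun _ => 0) (fun _ => 0) 0.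

Definition hmul {n} (p q : Hpt n) : Hpt n :=
  mkH (fun j => hx p j + hx q j) (fun j => hy p j + hy q j)
      (ht p + ht q + / 2 * imdot p q).
Definition hinv {n} (p : Hpt n) : Hpt n :=
  mkH (fun j => - hx p j) (fun j => - hy p j) (- ht p).
Definition dil {n} (l : R) (p : Hpt n) : Hpt n :=
  mkH (fun j => l * hx p j) (fun j => l * hy p j) (l ^ 2 * ht p).

Definition gauge {n} (p : Hpt n) : R :=
  / sqrt 2 * sqrt (znormsq p + sqrt (znormsq p ^ 2 + 4 * ht p ^ 2)).

Definition hdist {n} (p q : Hpt n) : R := gauge (hmul p (hinv q)).

Definition phat {n} (p : Hpt n) : Hpt n := dil (/ hdist p (H0 n)) p.

Definition sphere {n} (r : R) (p : Hpt n) (y : Hpt n) : Prop := hdist y p = r.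

(* y in ∂_t B_r(p), i.e. inf_{x in ∂B_r(p)} d(y,x) <= t
   (inf of the empty set = +infinity) *)
Definition thick_bdry {n} (t r : R) (p : Hpt n) (y : Hpt n) : Prop :=
  forall s, t < s -> exists x, sphere r p x /\ hdist y x < s.

(* Main.v *)
Require Import Defs.
From Stdlib Require Import Reals Lra Lia Psatz FunctionalExtensionality.
From mathcomp Require Import ssreflect ssrfun ssrbool eqtype ssrnat seq fintype bigop.
Open Scope R_scope.

Lemma rsum_ext n (f g : 'I_n -> R) : (forall j, f j = g j) -> rsum n f = rsum n g.
Proof. move=> H; rewrite /rsum; apply: eq_bigr => j _; exact: H. Qed.

Lemma rsum_plus n : forall f g : 'I_n -> R,
  rsum n (fun j => f j + g j) = rsum n f + rsum n g.
Proof.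
elim: n => [|n IH] f g; unfold rsum.
- rewrite !big_ord0; lra.
- rewrite !big_ord_recl /=.
  have := IH (fun i => f (lift ord0 i)) (fun i => g (lift ord0 i)).
  move=> E; unfold rsum in E; rewrite E -!/(rsum _ _); lra.
Qed.

Lemma rsum_scal n : forall (c : R) (f : 'I_n -> R),
  rsum n (fun j => c * f j) = c * rsum n f.
Proof.
elim: n => [|n IH] c f; unfold rsum.
- rewrite !big_ord0; lra.
- rewrite !big_ord_recl /=.
  have := IH c (fun i => f (lift ord0 i)).
  move=> E; unfold rsum in E; rewrite E -!/(rsum _ _); lra.
Qed.

Lemma rsum_le n : forall f g : 'I_n -> R, (forall j, f j <= g j) -> rsum n f <= rsum n g.
Proof.
elim: n => [|n IH] f g H; unfold rsum.
- rewrite !big_ord0; lra.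
- rewrite !big_ord_recl /=.
  rewrite -!/(rsum _ _); apply: Rplus_le_compat; first exact: H.
  apply: (IH (fun i => f (lift ord0 i)) (fun i => g (lift ord0 i))). move=> j; exact: H.
Qed.

Lemma rsum_comb1 n (f g : 'I_n -> R) a : (forall j, f j = a * g j) -> rsum n f = a * rsum n g.
Proof. move=> H; rewrite -rsum_scal; exact: rsum_ext. Qed.

Lemma rsum_comb2 n (f g h : 'I_n -> R) a b :
  (forall j, f j = a * g j + b * h j) -> rsum n f = a * rsum n g + b * rsum n h.
Proof. move=> H; rewrite -!rsum_scal -rsum_plus; exact: rsum_ext. Qed.

Lemma rsum_comb3 n (f g h k : 'I_n -> R) a b c :
  (forall j, f j = a * g j + b * h j + c * k j) ->
  rsum n f = a * rsum n g + b * rsum n h + c * rsum n k.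
Proof. move=> H; rewrite -!rsum_scal -!rsum_plus; exact: rsum_ext. Qed.

Lemma rsum_0 n (f : 'I_n -> R) : (forall j, f j = 0) -> rsum n f = 0.
Proof. move=> H; rewrite (rsum_comb1 n f f 0); first ring. move=> j; rewrite H; lra. Qed.

Lemma rsum_ge0 n (f : 'I_n -> R) : (forall j, 0 <= f j) -> 0 <= rsum n f.
Proof.
move=> H. have -> : 0 = rsum n (fun _ => 0) by rewrite rsum_0.
exact: rsum_le.
Qed.

Lemma znormsq_ge0 {n} (x : Hpt n) : 0 <= znormsq x.
Proof. apply: rsum_ge0 => j; nra. Qed.

Lemma sq_inj a b : 0 <= a -> 0 <= b -> a ^ 2 = b ^ 2 -> a = b.
Proof. move=> ha hb h; nra. Qed.

Lemma gauge_sq {n} (x : Hpt n) :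
  gauge x ^ 2 = (znormsq x + sqrt (znormsq x ^ 2 + 4 * ht x ^ 2)) / 2
  /\ sqrt (znormsq x ^ 2 + 4 * ht x ^ 2) * sqrt (znormsq x ^ 2 + 4 * ht x ^ 2)
     = znormsq x ^ 2 + 4 * ht x ^ 2
  /\ znormsq x <= sqrt (znormsq x ^ 2 + 4 * ht x ^ 2).
Proof.
set S := znormsq x; set T := ht x.
have hS : 0 <= S := znormsq_ge0 x.
have hQ : S <= sqrt (S ^ 2 + 4 * T ^ 2).
{ rewrite -{1}(sqrt_pow2 S hS). apply: sqrt_le_1_alt. nra. }
have hQ2 : sqrt (S ^ 2 + 4 * T ^ 2) * sqrt (S ^ 2 + 4 * T ^ 2) = S ^ 2 + 4 * T ^ 2.
{ apply: sqrt_sqrt. nra. }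
split; last by split.
rewrite /gauge -/S -/T.
have h2 : sqrt 2 * sqrt 2 = 2 by apply: sqrt_sqrt; lra.
have h2p : 0 < sqrt 2 by apply: sqrt_lt_R0; lra.
have hs : sqrt (S + sqrt (S ^ 2 + 4 * T ^ 2)) * sqrt (S + sqrt (S ^ 2 + 4 * T ^ 2))
   = S + sqrt (S ^ 2 + 4 * T ^ 2)  by apply: sqrt_sqrt; lra.
replace ((/ sqrt 2 * sqrt (S + sqrt (S ^ 2 + 4 * T ^ 2))) ^ 2) with
  (/ (sqrt 2 * sqrt 2) * (sqrt (S + sqrt (S ^ 2 + 4 * T ^ 2)) * sqrt (S + sqrt (S ^ 2 + 4 * T ^ 2))))
  by (field; lra).
rewrite h2 hs; field.
Qed.

Lemma gauge_ge0 {n} (x : Hpt n) : 0 <= gauge x.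
Proof.
rewrite /gauge; apply: Rmult_le_pos; last exact: sqrt_pos.
apply: Rlt_le; apply: Rinv_0_lt_compat; apply: sqrt_lt_R0; lra.
Qed.

Lemma gauge_char {n} (x : Hpt n) :
  gauge x ^ 4 = znormsq x * gauge x ^ 2 + ht x ^ 2 /\ znormsq x <= gauge x ^ 2.
Proof.
have [h1 [h2 h3]] := gauge_sq x.
set Q := sqrt _ in h1 h2 h3.
replace (gauge x ^ 4) with ((gauge x ^ 2) ^ 2) by ring.
rewrite h1; split; nra.
Qed.

Lemma gauge_le {n} (x : Hpt n) rho : 0 <= rho -> znormsq x <= rho ^ 2 ->
  znormsq x * rho ^ 2 + ht x ^ 2 <= rho ^ 4 -> gauge x <= rho.
Proof.
move=> h0 h1 h2.
have [c1 c2] := gauge_char x.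
have g0 := gauge_ge0 x.
destruct (Rle_lt_dec (gauge x) rho) as [|hlt]; first done.
exfalso.
set N := gauge x in c1 c2 g0 hlt.
set S := znormsq x in h1 h2 c1 c2.
have hu : rho ^ 2 < N ^ 2 by nra.
set u := N ^ 2 in hu c1 c2. set v := rho ^ 2 in h1 h2 hu.
have e1 : N ^ 4 = u * u by rewrite /u; ring.
have e2 : rho ^ 4 = v * v by rewrite /v; ring.
rewrite e1 in c1. rewrite e2 in h2.
have hv : 0 <= v by rewrite /v; nra.
nra.
Qed.

Lemma gauge_bound {n} (x : Hpt n) a : gauge x <= a ->
  znormsq x <= a ^ 2 /\ znormsq x * a ^ 2 + ht x ^ 2 <= a ^ 4.
Proof.
move=> h.
have [c1 c2] := gauge_char x.
have g0 := gauge_ge0 x.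
set N := gauge x in h c1 c2 g0.
have hS := znormsq_ge0 x.
split; first nra.
have : a ^ 4 - znormsq x * a ^ 2 - ht x ^ 2 = (a^2 - N^2) * (a^2 + N^2 - znormsq x).
{ have -> : ht x ^ 2 = N ^ 4 - znormsq x * N ^ 2 by lra. ring. }
have : 0 <= a ^ 2 - N ^ 2 by nra.
nra.
Qed.

Lemma gauge_ext {n} (x y : Hpt n) : znormsq x = znormsq y -> ht x ^ 2 = ht y ^ 2 ->
  gauge x = gauge y.
Proof. move=> h1 h2; rewrite /gauge h1 h2. done. Qed.

Lemma gauge_dil {n} l (x : Hpt n) : 0 < l -> gauge (dil l x) = l * gauge x.
Proof.
move=> hl.
have eS : znormsq (dil l x) = l ^ 2 * znormsq x.
{ rewrite /znormsq; apply: rsum_comb1 => j /=; ring. }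
have eT : ht (dil l x) = l ^ 2 * ht x by [].
apply: sq_inj.
- exact: gauge_ge0.
- have := gauge_ge0 x; nra.
have [h1 _] := gauge_sq (dil l x).
have [h2 _] := gauge_sq x.
rewrite h1 eS eT (Rpow_mult_distr l (gauge x)) h2.
replace ((l ^ 2 * znormsq x) ^ 2 + 4 * (l ^ 2 * ht x) ^ 2) with
  ((l ^ 2) ^ 2 * (znormsq x ^ 2 + 4 * ht x ^ 2)) by ring.
rewrite sqrt_mult; [|nra|nra].
rewrite sqrt_pow2; last nra.
field.
Qed.

Lemma hdist_sym {n} (x y : Hpt n) : hdist x y = hdist y x.
Proof.
rewrite /hdist; apply: gauge_ext.
- rewrite /znormsq; apply: rsum_ext => j /=; ring.
- have E : imdot x (hinv y) = (-1) * imdot y (hinv x).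
  { rewrite /imdot; apply: rsum_comb1 => j /=; ring. }
  rewrite /= E; ring.
Qed.

Lemma hdist_0r {n} (p : Hpt n) : hdist p (H0 n) = gauge p.
Proof.
rewrite /hdist; apply: gauge_ext.
- rewrite /znormsq; apply: rsum_ext => j /=; ring.
- have E : imdot p (hinv (H0 n)) = 0.
  { rewrite /imdot; apply: rsum_0 => j /=; ring. }
  rewrite /= E; ring.
Qed.

Lemma hdist_0l {n} (p : Hpt n) : hdist (H0 n) p = gauge p.
Proof. by rewrite hdist_sym hdist_0r. Qed.

Lemma tri_id {n} (y x p : Hpt n) :
  gauge (hmul (hmul y (hinv x)) (hmul x (hinv p))) = hdist y p.
Proof.
rewrite /hdist; apply: gauge_ext.
- rewrite /znormsq; apply: rsum_ext => j /=; ring.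
- have E : imdot (hmul y (hinv x)) (hmul x (hinv p)) =
     1 * imdot y (hinv p) + (-1) * imdot y (hinv x) + (-1) * imdot x (hinv p).
  { rewrite /imdot; apply: rsum_comb3 => j /=; ring. }
  cbn [ht hmul hinv]. rewrite E; ring.
Qed.
Lemma core_real0 a b Sv Tv Sp Tp E rho : 0 < a -> a <= b -> 0 <= Sv ->
  Sv * b ^ 2 + Tv ^ 2 <= b ^ 4 -> 0 <= Sp -> Sp <= Sv + 2 * a * b + a ^ 2 ->
  E = a ^ 2 + a * b / 2 -> rho = b + 5 * a ->
  Tp - Tv <= E -> - E <= Tp - Tv ->
  Sp * rho ^ 2 + Tp ^ 2 <= rho ^ 4.
Proof.
move=> ha hab hSv hv hSp hSpb hEd hrd he1 he2.
have hb : 0 < b by lra.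
have hrho : b <= rho by lra.
have hSvb : Sv <= b ^ 2.
{ have : Sv * b ^ 2 <= b ^ 2 * b ^ 2 by nra. have : 0 < b ^ 2 by nra. nra. }
have hTv1 : Tv ^ 2 <= b ^ 4 by nra.
have hTv : - b ^ 2 <= Tv <= b ^ 2 by split; nra.
have hE : 0 <= E by nra.
have hEab : E <= 3 / 2 * a * b by nra.
have h1 : Sp * rho ^ 2 <= (Sv + 2 * a * b + a ^ 2) * rho ^ 2.
{ apply: Rmult_le_compat_r; [nra|lra]. }
have h2 : Tp ^ 2 <= Tv ^ 2 + 2 * b ^ 2 * E + E ^ 2.
{ have : 0 <= (b ^ 2 - Tv) * (E + (Tp - Tv)) by apply: Rmult_le_pos; lra.
  have : 0 <= (b ^ 2 + Tv) * (E - (Tp - Tv)) by apply: Rmult_le_pos; lra.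
  have : 0 <= (E + (Tp - Tv)) * (E - (Tp - Tv)) by apply: Rmult_le_pos; lra.
  nra. }
have h3 : Sv * rho ^ 2 + Tv ^ 2 <= b ^ 2 * rho ^ 2.
{ have : Sv * (rho ^ 2 - b ^ 2) <= b ^ 2 * (rho ^ 2 - b ^ 2).
  { apply: Rmult_le_compat_r; [nra|lra]. }
  nra. }
have hr2 : rho ^ 2 - b ^ 2 >= 10 * a * b + 25 * a ^ 2 by rewrite hrd; nra.
have hbr : b ^ 2 <= rho ^ 2 by nra.
have hab2 : a * b <= rho ^ 2 by nra.
have k1 : 2 * b ^ 2 * E <= 3 * a * b * rho ^ 2.
{ have : 2 * b ^ 2 * E <= 2 * b ^ 2 * (3 / 2 * a * b).
  { apply: Rmult_le_compat_l; nra. }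
  have : a * b * b ^ 2 <= a * b * rho ^ 2 by apply: Rmult_le_compat_l; nra.
  nra. }
have k2 : E ^ 2 <= 9 / 4 * a * b * rho ^ 2.
{ have : E ^ 2 <= (3 / 2 * a * b) ^ 2 by nra.
  have : (a * b) * (a * b) <= (a * b) * rho ^ 2 by apply: Rmult_le_compat_l; nra.
  nra. }
have k3 : (2 * a * b + a ^ 2) * rho ^ 2 <= 3 * a * b * rho ^ 2.
{ apply: Rmult_le_compat_r; nra. }
have k4 : rho ^ 2 * (rho ^ 2 - b ^ 2) >= rho ^ 2 * (10 * a * b).
{ apply: Rle_ge; apply: Rmult_le_compat_l; nra. }
have e4 : rho ^ 4 = rho ^ 2 * rho ^ 2 by ring.
have : 0 <= a * b * rho ^ 2 by nra.
nra.
Qed.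

Lemma amgm k u v : 0 < k -> 2 * u * v <= k * u ^ 2 + / k * v ^ 2.
Proof.
move=> hk.
have h : k * u ^ 2 + / k * v ^ 2 - 2 * u * v = / k * (k * u - v) ^ 2 by field; lra.
have : 0 <= / k * (k * u - v) ^ 2.
{ apply: Rmult_le_pos; [apply: Rlt_le; exact: Rinv_0_lt_compat | apply: pow2_ge_0]. }
lra.
Qed.

Lemma tri_gauge {n} (u v : Hpt n) a : 0 < a -> gauge u <= a ->
  gauge (hmul u v) <= Rmax a (gauge v) + 5 * a.
Proof.
move=> ha hua.
have hab : a <= Rmax a (gauge v) := Rmax_l _ _.
have hvb : gauge v <= Rmax a (gauge v) := Rmax_r _ _.
move: hab hvb; set b := Rmax a (gauge v) => hab hvb.
have hb : 0 < b by lra.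
have [hu1 hu2] := gauge_bound u a hua.
have [hv1 hv2] := gauge_bound v b hvb.
have hSu := znormsq_ge0 u. have hSv := znormsq_ge0 v.
have hSp := znormsq_ge0 (hmul u v).
pose k := b / a.
have hk : 0 < k by rewrite /k; apply: Rdiv_lt_0_compat.
have hka : k * a ^ 2 = a * b by rewrite /k; field; lra.
have hkb : / k * b ^ 2 = a * b by rewrite /k; field; lra.
have hS : znormsq (hmul u v) <= (1 + k) * znormsq u + (1 + / k) * znormsq v.
{ rewrite /znormsq -!rsum_scal -rsum_plus; apply: rsum_le => j /=.
  have := amgm k (hx u j) (hx v j) hk. have := amgm k (hy u j) (hy v j) hk. nra. }
have hI1 : imdot u v <= / 2 * (k * znormsq u + / k * znormsq v).
{ rewrite /imdot /znormsq -!rsum_scal -rsum_plus -rsum_scal; apply: rsum_le => j /=.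
  have := amgm k (hx u j) (hy v j) hk. have := amgm k (- hy u j) (hx v j) hk. nra. }
have hI2 : - imdot u v <= / 2 * (k * znormsq u + / k * znormsq v).
{ have -> : - imdot u v = rsum n (fun j => - (hx u j * hy v j - hy u j * hx v j)).
  { have E : rsum n (fun j => - (hx u j * hy v j - hy u j * hx v j)) =
      -1 * rsum n (fun j => hx u j * hy v j - hy u j * hx v j) by apply: rsum_comb1 => j; ring.
    rewrite /imdot E; ring. }
  rewrite /znormsq -!rsum_scal -rsum_plus -rsum_scal; apply: rsum_le => j /=.
  have := amgm k (- hx u j) (hy v j) hk. have := amgm k (hy u j) (hx v j) hk. nra. }
have hkSu : k * znormsq u <= a * b by rewrite -hka; apply: Rmult_le_compat_l; lra.
have hkSv : / k * znormsq v <= a * b.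
{ rewrite -hkb; apply: Rmult_le_compat_l; [apply: Rlt_le; exact: Rinv_0_lt_compat | lra]. }
have hTu : - a ^ 2 <= ht u <= a ^ 2 by split; nra.
apply: gauge_le.
- lra.
- have : (1 + k) * znormsq u <= (1 + k) * a ^ 2 by apply: Rmult_le_compat_l; lra.
  nra.
- apply: (core_real0 a b (znormsq v) (ht v) _ _ (a ^ 2 + a * b / 2)) => //.
  + have : (1 + k) * znormsq u <= (1 + k) * a ^ 2 by apply: Rmult_le_compat_l; lra.
    nra.
  + cbn [ht hmul]. nra.
  + cbn [ht hmul]. nra.
Qed.

Lemma dist_tri {n} (y x p : Hpt n) a : 0 < a -> hdist y x <= a ->
  hdist y p <= Rmax a (hdist x p) + 5 * a.
Proof. move=> ha h; rewrite -(tri_id y x p); exact: tri_gauge. Qed.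

Lemma thick_dist {n} t r (p y : Hpt n) : 1 <= t -> 12 * t < r -> thick_bdry t r p y ->
  r - 10 * t <= hdist y p <= r + 10 * t.
Proof.
move=> ht hr hth.
have [x [hx1 hx2]] := hth (2 * t) ltac:(lra).
have hyx : hdist y x <= 2 * t by lra.
split.
- have hxy : hdist x y <= 2 * t by rewrite hdist_sym.
  have := dist_tri x y p (2 * t) ltac:(lra) hxy.
  rewrite /sphere in hx1. rewrite hx1.
  rewrite /Rmax; case: Rle_dec => _; lra.
- have := dist_tri y x p (2 * t) ltac:(lra) hyx.
  rewrite /sphere in hx1. rewrite hx1.
  rewrite /Rmax; case: Rle_dec => _; lra.
Qed.
Lemma final_num eps r rr t tt R c A B D G :
  0 < eps < 1 -> 1 <= t -> 1 <= tt -> t * R <= r -> tt * R <= rr -> rr <= r ->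
  eps * r <= rr -> R * eps ^ 2 >= 400 -> R >= 40 ->
  r - 10 * t <= A <= r + 10 * t -> rr - 10 * tt <= B <= rr + 10 * tt ->
  r - 10 * t <= D -> D <= Rmax (A * c) G + 5 * (A * c) -> 0 <= G ->
  G ^ 2 <= Rabs (A ^ 2 - B ^ 2) -> 0 < c -> c <= eps ^ 2 / 14 -> False.
Proof.
move=> he ht htt htR httR hrr herr hRe hR hA hB hD hDG hG hG2 hc hce.
have h40t : 40 * t <= r by nra.
have h40tt : 40 * tt <= rr by nra.
have hr : 40 <= r by lra.
have he2 : eps ^ 2 <= eps by nra.
have he21 : eps ^ 2 < 1 by nra.
have h10tt : 10 * tt <= eps * r.
{ have : 0 <= tt * R * (eps - eps ^ 2) by apply: Rmult_le_pos; nra.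
  have : 400 * tt <= tt * (R * eps ^ 2) by nra.
  have : tt * R * eps <= rr * eps by apply: Rmult_le_compat_r; lra.
  have : rr * eps <= r * eps by apply: Rmult_le_compat_r; lra.
  nra. }
have hA0 : 0 < A by lra.
have hr0 : 0 < r by lra.
have hAc : A * c <= (r + 10 * t) * (eps ^ 2 / 14).
{ apply: Rmult_le_compat; lra. }
have he2p : 0 <= eps ^ 2 by nra.
have hte : t * eps ^ 2 <= t by nra.
have hre : r * eps ^ 2 <= r by nra.
move: hDG; rewrite /Rmax; case: Rle_dec => hcase hDG.
-
  have hL : r - 14 * t - 5 * eps ^ 2 * r / 14 <= G by lra.
  have hX : 0 <= 14 * t + 5 * eps ^ 2 * r / 14 by nra.
  have hLpos : 0 <= r - (14 * t + 5 * eps ^ 2 * r / 14) by lra.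
  have hG2L : (r - (14 * t + 5 * eps ^ 2 * r / 14)) ^ 2 <= G ^ 2.
  { apply: pow_incr; lra. }
  have hAB : Rabs (A ^ 2 - B ^ 2) <= r ^ 2 - eps ^ 2 * r ^ 2 + 25 * r * t + 25 * r * tt.
  { have hB0 : 0 <= eps * r - 10 * tt by lra.
    have hA2 : A ^ 2 <= (r + 10 * t) ^ 2 by apply: pow_incr; lra.
    have hB2 : (eps * r - 10 * tt) ^ 2 <= B ^ 2 by apply: pow_incr; lra.
    have hB2' : B ^ 2 <= (r + 10 * tt) ^ 2 by apply: pow_incr; lra.
    have hA2' : (r - 10 * t) ^ 2 <= A ^ 2 by apply: pow_incr; lra.
    have : 100 * t ^ 2 <= 5 / 2 * r * t by nra.
    have : 100 * tt ^ 2 <= 5 / 2 * r * tt by nra.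
    have : eps * r * tt <= r * tt by nra.
    have : eps ^ 2 * r ^ 2 <= r ^ 2 by nra.
    have : 0 <= t ^ 2 by nra. have : 0 <= tt ^ 2 by nra. split_Rabs; lra. }
  have hm : eps ^ 2 * r * (4 / 14) * r <= (53 * t + 25 * tt) * r.
  { have : 0 <= (14 * t + 5 * eps ^ 2 * r / 14) ^ 2 by apply: pow2_ge_0.
    nra. }
  have h1 : eps ^ 2 * r * (4 / 14) <= 53 * t + 25 * tt.
  { apply: (Rmult_le_reg_r r); lra. }
  have : eps ^ 2 * r * (4 / 14) * R <= (53 * t + 25 * tt) * R by apply: Rmult_le_compat_r; lra.
  have : r * 400 <= r * (R * eps ^ 2) by apply: Rmult_le_compat_l; lra.
  nra.
-
  have : A * c <= (r + 10 * t) / 14 by nra.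
  lra.
Qed.

Lemma dil_inv {n} l (x : Hpt n) : l <> 0 -> dil l (dil (/ l) x) = x.
Proof.
move=> hl; case: x => a b c; rewrite /dil /=; f_equal.
- apply: functional_extensionality => j; field; done.
- apply: functional_extensionality => j; field; done.
- field; done.
Qed.

Lemma split_id {n} A B (P Q : Hpt n) :
  gauge (hmul (dil A P) (hinv (dil B Q))) =
  gauge (hmul (dil A (hmul P (hinv Q))) (hmul (dil A Q) (hinv (dil B Q)))).
Proof.
apply: gauge_ext.
- rewrite /znormsq; apply: rsum_ext => j /=; ring.
- have E1 : imdot (dil A P) (hinv (dil B Q)) = (A * B) * imdot P (hinv Q).
  { rewrite /imdot; apply: rsum_comb1 => j /=; ring. }
  have E2 : imdot (dil A Q) (hinv (dil B Q)) = 0 * imdot P (hinv Q).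
  { rewrite /imdot; apply: rsum_comb1 => j /=; ring. }
  have E3 : imdot (dil A (hmul P (hinv Q))) (hmul (dil A Q) (hinv (dil B Q)))
          = (- (A * (A - B))) * imdot P (hinv Q).
  { rewrite /imdot; apply: rsum_comb1 => j /=; ring. }
  cbn [ht hmul hinv dil]. rewrite E1 E2 E3; ring.
Qed.

Lemma F2_bound {n} A B (Q : Hpt n) : 0 <= A -> 0 <= B -> gauge Q = 1 ->
  gauge (hmul (dil A Q) (hinv (dil B Q))) <= sqrt (Rabs (A ^ 2 - B ^ 2)).
Proof.
move=> hA hB hQ.
have eS : znormsq (hmul (dil A Q) (hinv (dil B Q))) = (A - B) ^ 2 * znormsq Q.
{ rewrite /znormsq; apply: rsum_comb1 => j /=; ring. }
have E2 : imdot (dil A Q) (hinv (dil B Q)) = 0 * imdot Q Q.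
{ rewrite /imdot; apply: rsum_comb1 => j /=; ring. }
have eT : ht (hmul (dil A Q) (hinv (dil B Q))) = (A ^ 2 - B ^ 2) * ht Q.
{ cbn [ht hmul hinv dil]. rewrite E2; ring. }
have [c1 c2] := gauge_char Q.
rewrite hQ in c1 c2.
have hS := znormsq_ge0 Q.
set D := A ^ 2 - B ^ 2.
have hAB : (A - B) ^ 2 <= Rabs D.
{ rewrite /D. case: (Rle_dec A B) => hc.
  - rewrite Rabs_left1; last nra. nra.
  - rewrite Rabs_right; last nra. nra. }
have hD0 : 0 <= Rabs D := Rabs_pos D.
have hr2 : sqrt (Rabs D) ^ 2 = Rabs D by rewrite /= Rmult_1_r; apply: sqrt_sqrt.
have hr4 : sqrt (Rabs D) ^ 4 = Rabs D * Rabs D.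
{ replace (sqrt (Rabs D) ^ 4) with ((sqrt (Rabs D) ^ 2) ^ 2) by ring. rewrite hr2; ring. }
have hDD : Rabs D * Rabs D = D ^ 2 by rewrite -Rabs_mult Rabs_right; [ring | nra].
apply: gauge_le.
- exact: sqrt_pos.
- rewrite eS hr2. have : znormsq Q <= 1 by lra. nra.
- rewrite eS eT hr2 hr4 hDD.
  have : (A - B) ^ 2 * znormsq Q * Rabs D <= Rabs D * znormsq Q * Rabs D.
  { apply: Rmult_le_compat_r => //; apply: Rmult_le_compat_r => //. }
  have e1 : 1 ^ 4 = 1 by ring. have e2 : 1 ^ 2 = 1 by ring.
  rewrite e1 e2 in c1.
  have h : D ^ 2 * (znormsq Q * 1 + ht Q ^ 2) = D ^ 2 by rewrite -c1; ring.
  rewrite -/D. move=> hh. rewrite -hDD in h |- *. nra.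
Qed.

Theorem lemma11 (n : nat) :
  forall eps : R, 0 < eps < 1 ->
  exists Rbar : R, 0 < Rbar /\
  forall (p q : Hpt n) (t tt R r rr : R),
    p <> H0 n -> q <> H0 n ->
    1 <= t -> 1 <= tt ->
    Rbar < R -> 1 < R ->
    rr <= r -> t * tt * R <= rr -> eps * r <= rr ->
    thick_bdry t r p (H0 n) -> thick_bdry tt rr q (H0 n) ->
    thick_bdry t r p q ->
    hdist (phat p) (phat q) >= / 2 * (1 - sqrt (1 - eps ^ 2 / 4)).
Proof.
move=> eps he.
have he2 : 0 < eps ^ 2 by nra.
have hfr : 0 < 400 / eps ^ 2 by apply: Rdiv_lt_0_compat; lra.
exists (400 / eps ^ 2 + 40); split; first lra.
move=> p q t tt R r rr hp hq ht htt hRb hR1 hrr htR her th1 th2 th3.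
have hR40 : R >= 40 by lra.
have hRe : R * eps ^ 2 >= 400.
{ have : (400 / eps ^ 2 + 40) * eps ^ 2 <= R * eps ^ 2 by apply: Rmult_le_compat_r; lra.
  have -> : (400 / eps ^ 2 + 40) * eps ^ 2 = 400 + 40 * eps ^ 2 by field; lra.
  lra. }
have htR' : t * R <= r.
{ have : t * R * 1 <= t * R * tt by apply: Rmult_le_compat_l; nra.
  nra. }
have httR : tt * R <= rr.
{ have : tt * R * 1 <= tt * R * t by apply: Rmult_le_compat_l; nra.
  nra. }
have h12t : 12 * t < r by nra.
have h12tt : 12 * tt < rr by nra.
have [hA1 hA2] := thick_dist t r p (H0 n) ht h12t th1.
have [hB1 hB2] := thick_dist tt rr q (H0 n) htt h12tt th2.
have [hD1 hD2] := thick_dist t r p q ht h12t th3.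
rewrite hdist_0l in hA1 hA2. rewrite hdist_0l in hB1 hB2.
have hA0 : 0 < gauge p by lra.
have hB0 : 0 < gauge q by lra.
set sq := sqrt (1 - eps ^ 2 / 4).
have hsq2 : sq * sq = 1 - eps ^ 2 / 4 by apply: sqrt_sqrt; nra.
have hsq0 : 0 <= sq := sqrt_pos _.
have hsq34 : 3 / 4 <= sq by nra.
have hsq1 : sq < 1 by nra.
have hc0 : 0 < / 2 * (1 - sq) by lra.
have hce : / 2 * (1 - sq) <= eps ^ 2 / 14 by nra.
apply: Rnot_lt_ge => hlt.
have ePp : phat p = dil (/ gauge p) p by rewrite /phat hdist_0r.
have ePq : phat q = dil (/ gauge q) q by rewrite /phat hdist_0r.
have gP : gauge (phat p) = 1.
{ rewrite ePp gauge_dil; [field; lra | apply: Rinv_0_lt_compat; lra]. }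
have gQ : gauge (phat q) = 1.
{ rewrite ePq gauge_dil; [field; lra | apply: Rinv_0_lt_compat; lra]. }
have Ep : dil (gauge p) (phat p) = p by rewrite ePp; apply: dil_inv; lra.
have Eq : dil (gauge q) (phat q) = q by rewrite ePq; apply: dil_inv; lra.
have hDist : hdist q p =
  gauge (hmul (dil (gauge p) (hmul (phat p) (hinv (phat q))))
              (hmul (dil (gauge p) (phat q)) (hinv (dil (gauge q) (phat q))))).
{ rewrite -split_id Ep Eq hdist_sym. done. }
have hF1 : gauge (dil (gauge p) (hmul (phat p) (hinv (phat q)))) <=
           gauge p * (/ 2 * (1 - sq)).
{ rewrite gauge_dil //. apply: Rmult_le_compat_l; first lra.
  rewrite /hdist in hlt. lra. }
have hAc0 : 0 < gauge p * (/ 2 * (1 - sq)) by nra.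
have hT := tri_gauge _ (hmul (dil (gauge p) (phat q)) (hinv (dil (gauge q) (phat q)))) _ hAc0 hF1.
rewrite -hDist in hT.
have hG := F2_bound (gauge p) (gauge q) (phat q) ltac:(lra) ltac:(lra) gQ.
move: hG hT.
set G := gauge (hmul (dil (gauge p) (phat q)) (hinv (dil (gauge q) (phat q)))) => hG hT.
have hG0 : 0 <= G := gauge_ge0 _.
have hG2 : G ^ 2 <= Rabs (gauge p ^ 2 - gauge q ^ 2).
{ have : G ^ 2 <= sqrt (Rabs (gauge p ^ 2 - gauge q ^ 2)) ^ 2 by apply: pow_incr; lra.
  have hs : sqrt (Rabs (gauge p ^ 2 - gauge q ^ 2)) ^ 2 = Rabs (gauge p ^ 2 - gauge q ^ 2).
  { apply: pow2_sqrt; exact: Rabs_pos. }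
  lra. }
apply: (final_num eps r rr t tt R (/ 2 * (1 - sq)) (gauge p) (gauge q) (hdist q p) G) => //; lra.
Qed.
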